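(* Let $\Gamma$ be a semigroupoid with object set $S$, $\tau\colon S\to X$ a map, and for $\gamma\in\Gamma$ let $L(\gamma)$ be the densely defined operator from $\ell^2_\tau(\Gamma;\tau(d(\gamma)))$ to $\ell^2_\tau(\Gamma;\tau(c(\gamma)))$ whose domain is the finitely supported functions, given by $L(\gamma)\delta_\beta=\delta_{\gamma\beta}$ if $c(\beta)=d(\gamma)$ and $L(\gamma)\delta_\beta=0$ otherwise. Let $m_\gamma\colon\Gamma^{d(\gamma)}\to\Gamma^{c(\gamma)}$, $m_\gamma(\alpha)=\gamma\alpha$. Then: (i) for $\beta\in\Gamma^{c(\gamma)}$, $\delta_\beta\in\mathrm{dom}\,L(\gamma)^*$ if $m_\gamma^{-1}(\{\beta\})$ is finite, while if $m_\gamma^{-1}(\{\beta\})$ is infinite then every vector of $\mathrm{dom}\,L(\gamma)^*$ is orthogonal to $\delta_\beta$; consequently $L(\gamma)$ is closable if and only if $m_\gamma^{-1}(\{\beta\})$ is finite for every $\beta\in\Gamma^{c(\gamma)}$. (ii) $L(\gamma)$ is bounded if and only if there is $N\in\mathbb N$ with $|m_\gamma^{-1}(\{\beta\})|\le N$ for all $\beta\in\Gamma^{c(\gamma)}$, and in that case $\|L(\gamma)\|\le N$. (iii) If $\Gamma$ satisfies: for every $\gamma\in\Gamma$ and $\beta\ne\beta'$ in $\Gamma^{d(\gamma)}$, $\gamma\beta\ne\gamma\beta'$, then each $L(\gamma)$ extends to a partial isometry and $(\tau;L)$ is an orthogonal representation of $\Gamma$ on $\{\ell^2_\tau(\Gamma;x)\}_{x\in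 X}$.
   Context: A semigroupoid $(\Gamma;S;d;c;\cdot)$ consists of nonempty sets $\Gamma,S$, maps $d,c\colon\Gamma\to S$, and for all $\alpha,\beta$ with $d(\alpha)=c(\beta)$ a product $\alpha\beta$ with $d(\alpha\beta)=d(\beta)$, $c(\alpha\beta)=c(\alpha)$, associative whenever defined; $\Gamma^s=\{\alpha:c(\alpha)=s\}$. For $x\in X$, $\ell^2_\tau(\Gamma;x)$ is the Hilbert space with orthonormal basis $\{\delta_\gamma:\gamma\in\Gamma,\ \tau(c(\gamma))=x\}$ (the zero space if this set is empty). A representation of $\Gamma$ on a family of Hilbert spaces $\{\mathcal H_x\}_{x\in X}$ with aggregation $\tau$ is a map $\Phi$ with $\Phi(\alpha)\in\mathcal B(\mathcal H_{\tau(d(\alpha))},\mathcal H_{\tau(c(\alpha))})$ and $\Phi(\alpha\beta)=\Phi(\alpha)\Phi(\beta)$ whenever $d(\alpha)=c(\beta)$; it is orthogonal if whenever $\tau(c(\alpha))=\tau(c(\beta))$ but $c(\alpha)\ne c(\beta)$, the ranges $\Phi(\alpha)\mathcal H_{\tau(d(\alpha))}$ and $\Phi(\beta)\mathcal H_{\tau(d(\beta))}$ are orthogonal. *)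

(* Defs.v *)
From HB Require Import structures.
From mathcomp Require Import all_boot all_order all_algebra.
From mathcomp Require Import all_classical all_reals all_analysis.
From mathcomp Require Import complex.
Set Implicit Arguments. Unset Strict Implicit. Unset Printing Implicit Defensive.
Import Order.TTheory GRing.Theory Num.Theory.
Local Open Scope classical_set_scope.
Local Open Scope ring_scope.

Section SemigroupoidL2.
Variables (R : realType) (Γ : choiceType) (S X : Type).
Variables (d c : Γ -> S) (mul : Γ -> Γ -> Γ) (τ : S -> X).

(** Semigroupoid axioms for (Γ; S; d; c; mul); the product [mul a b] is only
    meaningful when [d a = c b] (outside of that it is an arbitrary value). *)
Definition is_semigroupoid : Prop :=
  [/\ inhabited Γ, inhabited S,
      (forall a b, d a = c b -> d (mul a b) = d b),
      (forall a b, d a = c b -> c (mul a b) = c a) &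
      (forall a b g, d a = c b -> d b = c g ->
         mul (mul a b) g = mul a (mul b g))].

Definition fibre (s : S) : set Γ := [set g | c g = s].

Definition m_pre (γ β : Γ) : set Γ := [set a | c a = d γ /\ mul γ a = β].

Definition vec := Γ -> R[i].

Definition re (z : R[i]) : R := let: Complex a _ := z in a.
Definition im (z : R[i]) : R := let: Complex _ b := z in b.
Definition sqn (z : R[i]) : R := re z ^+ 2 + im z ^+ 2.
Definition cabs (z : R[i]) : R := Num.sqrt (sqn z).

Definition l2n2 (f : vec) : \bar R := \esum_(i in [set: Γ]) (sqn (f i))%:E.

Definition l2norm (f : vec) : R := Num.sqrt (fine (l2n2 f)).

Definition l2sp (x : X) : set vec :=
  [set f | (forall g, τ (c g) <> x -> f g = 0) /\ (l2n2 f < +oo)%E].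

Definition supp (f : vec) : set Γ := [set g | f g != 0].

Definition findom (x : X) : set vec := [set f | l2sp x f /\ finite_set (supp f)].

Definition rsum (u : Γ -> R) : R :=
  fine (\esum_(i in [set: Γ]) (Num.max (u i) 0)%:E) -
  fine (\esum_(i in [set: Γ]) (Num.max (- u i) 0)%:E).

Definition csum (z : Γ -> R[i]) : R[i] :=
  Complex (rsum (fun i => re (z i))) (rsum (fun i => im (z i))).

(** inner product of ℓ² (linear in the first variable) *)
Definition ip (f g : vec) : R[i] := csum (fun i => f i * conjc (g i)).

Definition delta (b : Γ) : vec := fun g => if g == b then 1 else 0.

(** L(γ) on finitely supported vectors: L(γ) δ_β = δ_{γβ} if c β = d γ, 0 otherwise *)
Definition Lop (γ : Γ) (f : vec) : vec :=
  fun a => \sum_(b \in [set b | c b = d γ /\ mul γ b = a]) f b.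

Definition adj_dom (γ : Γ) : set vec :=
  [set g | l2sp (τ (c γ)) g /\
     exists K : R, forall f, findom (τ (d γ)) f ->
       cabs (ip (Lop γ f) g) <= K * l2norm f].

(** closability of the densely defined operator L(γ): the closure of its graph
    is the graph of an operator *)
Definition closable (γ : Γ) : Prop :=
  forall (u : nat -> vec) (h : vec),
    (forall n, findom (τ (d γ)) (u n)) -> l2sp (τ (c γ)) h ->
    l2n2 (u n) @[n --> \oo] --> 0%E ->
    l2n2 (fun i => Lop γ (u n) i - h i) @[n --> \oo] --> 0%E ->
    h = (fun _ => 0).

Definition Lnorm_le (γ : Γ) (K : R) : Prop :=
  forall f, findom (τ (d γ)) f -> l2norm (Lop γ f) <= K * l2norm f.

Definition Lbounded (γ : Γ) : Prop := exists K : R, Lnorm_le γ K.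

Definition bounded_linear (x y : X) (T : vec -> vec) : Prop :=
  [/\ (forall f, l2sp x f -> l2sp y (T f)),
      (forall (a : R[i]) f g, l2sp x f -> l2sp x g ->
         T (fun i => a * f i + g i) = (fun i => a * T f i + T g i)) &
      (exists K : R, forall f, l2sp x f -> l2norm (T f) <= K * l2norm f)].

Definition partial_isometry (x : X) (T : vec -> vec) : Prop :=
  forall f, l2sp x f ->
    (forall k, l2sp x k -> T k = (fun _ => 0) -> ip f k = 0) ->
    l2norm (T f) = l2norm f.

Definition is_representation (Φ : Γ -> vec -> vec) : Prop :=
  (forall γ, bounded_linear (τ (d γ)) (τ (c γ)) (Φ γ)) /\
  (forall a b, d a = c b -> forall f, l2sp (τ (d b)) f ->
     Φ (mul a b) f = Φ a (Φ b f)).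

Definition is_orthogonal_rep (Φ : Γ -> vec -> vec) : Prop :=
  is_representation Φ /\
  (forall a b, τ (c a) = τ (c b) -> c a <> c b ->
     forall f g, l2sp (τ (d a)) f -> l2sp (τ (d b)) g ->
       ip (Φ a f) (Φ b g) = 0).

End SemigroupoidL2.

(* Main.v *)
Require Import Defs.
From HB Require Import structures.
From mathcomp Require Import all_boot all_order all_algebra.
From mathcomp Require Import all_classical all_reals all_analysis.
From mathcomp Require Import complex.
From mathcomp Require Import ring lra finmap.
Import Order.TTheory GRing.Theory Num.Theory numFieldNormedType.Exports.
Local Open Scope classical_set_scope.
Local Open Scope ring_scope.

Section PartA.
Variable R : realType.
Implicit Types (z w : R[i]).

Lemma sqn_ge0 z : 0 <= sqn z.
Proof. by case: z => x y; rewrite /sqn /=; apply: addr_ge0; apply: sqr_ge0. Qed.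

Lemma sqn0 : sqn (0 : R[i]) = 0.
Proof. by rewrite /sqn /= expr0n /= addr0. Qed.

Lemma sqn_eq0 z : sqn z = 0 -> z = 0.
Proof.
case: z => x y; rewrite /sqn /= => h.
have hx : x ^+ 2 = 0 by apply/eqP; rewrite eq_le sqr_ge0 andbT -h lerDl sqr_ge0.
have hy : y ^+ 2 = 0 by move: h; rewrite hx add0r.
by move/eqP: hx; rewrite sqrf_eq0 => /eqP ->; move/eqP: hy; rewrite sqrf_eq0 => /eqP ->.
Qed.

Lemma sqnM z w : sqn (z * w) = sqn z * sqn w.
Proof. case: z => x y; case: w => u v; rewrite /sqn /=; ring. Qed.

Lemma sqn_conj z : sqn (conjc z) = sqn z.
Proof. case: z => x y; rewrite /sqn /=; ring. Qed.

Lemma sqnD_le z w : sqn (z + w) <= 2 * (sqn z + sqn w).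
Proof. case: z => x y; case: w => u v; rewrite /sqn /=.
have := sqr_ge0 (x - u); have := sqr_ge0 (y - v); nra. Qed.

Lemma sqnB z w : sqn (z - w) = sqn (w - z).
Proof. case: z => x y; case: w => u v; rewrite /sqn /=; ring. Qed.

Lemma reD z w : re (z + w) = re z + re w. Proof. by case: z; case: w. Qed.
Lemma imD z w : im (z + w) = im z + im w. Proof. by case: z; case: w. Qed.

Lemma re_sum (T : Type) (s : seq T) (F : T -> R[i]) :
  re (\sum_(i <- s) F i) = \sum_(i <- s) re (F i).
Proof. elim: s => [|a s IH]; rewrite ?big_nil // !big_cons reD IH. done. Qed.
Lemma im_sum (T : Type) (s : seq T) (F : T -> R[i]) :
  im (\sum_(i <- s) F i) = \sum_(i <- s) im (F i).
Proof. elim: s => [|a s IH]; rewrite ?big_nil // !big_cons imD IH. done. Qed.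

Lemma cplx_eta z : z = Complex (re z) (im z). Proof. by case: z. Qed.

Lemma CS_real (T : Type) (s : seq T) (F : T -> R) :
  (\sum_(i <- s) F i) ^+ 2 <= (size s)%:R * \sum_(i <- s) F i ^+ 2.
Proof.
elim: s => [|a s IH]; first by rewrite big_nil expr0n /= mul0r.
rewrite !big_cons /= -natr1.
set S := \sum_(i <- s) F i in IH *; set Q := \sum_(i <- s) F i ^+ 2 in IH *.
set n := (size s)%:R in IH *.
have n0 : 0 <= n by rewrite /n ler0n.
have Q0 : 0 <= Q by rewrite /Q sumr_ge0 // => i _; apply: sqr_ge0.
have key : n * (2 * F a * S) <= n * (Q + n * F a ^+ 2).
  have := sqr_ge0 (n * F a - S); nra.
have [n_eq0|n_gt0] := eqVneq n 0.
  have : S ^+ 2 <= 0 by rewrite n_eq0 mul0r in IH.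
  move=> hS; have S0 : S = 0.
    by apply/eqP; rewrite -sqrf_eq0 eq_le hS sqr_ge0.
  rewrite S0 n_eq0; nra.
have npos : 0 < n by rewrite lt0r n_gt0 n0.
have : 2 * F a * S <= Q + n * F a ^+ 2 by rewrite -(ler_pM2l npos).
nra.
Qed.

Lemma CS (T : Type) (s : seq T) (F : T -> R[i]) :
  sqn (\sum_(i <- s) F i) <= (size s)%:R * \sum_(i <- s) sqn (F i).
Proof.
rewrite {1}/sqn re_sum im_sum.
rewrite /sqn big_split /= mulrDr.
by apply: lerD; apply: CS_real.
Qed.

Lemma max_diff (x : R) : Num.max x 0 - Num.max (- x) 0 = x.
Proof. rewrite /Order.max; case: ifPn => h1; case: ifPn => h2; lra. Qed.

Lemma esumT_fin (T : choiceType) (A : {fset T}) (g : T -> R) :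
  (forall i, 0 <= g i) -> (forall i, i \notin A -> g i = 0) ->
  \esum_(i in [set: T]) (g i)%:E = (\sum_(i <- A) g i)%:E.
Proof.
move=> g0 gA.
rewrite (esumID [set` A]); last by move=> i _; rewrite lee_fin.
rewrite [X in (_ + X)%E]esum1 ?adde0; last first.
  by move=> i [_ /= iA]; rewrite gA //; apply/negP.
rewrite setTI esum_fset //; last by move=> *; rewrite lee_fin.
by rewrite -fsbig_seq // sumEFin.
Qed.

Lemma rsum_fin (T : choiceType) (A : {fset T}) (u : T -> R) :
  (forall i, i \notin A -> u i = 0) ->
  @rsum R T u = \sum_(i <- A) u i.
Proof.
move=> uA; rewrite /rsum.
rewrite (@esumT_fin T A); last 2 first.
- by move=> i; rewrite le_max lexx orbT.
- by move=> i /uA ->; rewrite maxxx.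
rewrite (@esumT_fin T A); last 2 first.
- by move=> i; rewrite le_max lexx orbT.
- by move=> i /uA ->; rewrite oppr0 maxxx.
rewrite /= -sumrB; apply: eq_bigr => i _; exact: max_diff.
Qed.

Lemma csum_fin (T : choiceType) (A : {fset T}) (z : T -> R[i]) :
  (forall i, i \notin A -> z i = 0) ->
  @csum R T z = \sum_(i <- A) z i.
Proof.
move=> zA; rewrite /csum (@rsum_fin T A); last by move=> i /zA ->.
rewrite (@rsum_fin T A); last by move=> i /zA ->.
by rewrite [RHS]cplx_eta re_sum im_sum.
Qed.


Lemma cadd (a b u v : R) : Complex a b + Complex u v = Complex (a + u) (b + v).
Proof. by []. Qed.
Lemma cmul (a b u v : R) : Complex a b * Complex u v = Complex (a * u - b * v) (a * v + b * u).
Proof. by []. Qed.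
Lemma cone : (1 : R[i]) = Complex 1 0. Proof. by []. Qed.
Lemma czero : (0 : R[i]) = Complex 0 0. Proof. by []. Qed.

Lemma natC (n : nat) : (n%:R : R[i]) = Complex n%:R 0.
Proof.
elim: n => [|n IH] //; rewrite -[in LHS]natr1 IH cone cadd addr0.
by rewrite -natr1.
Qed.

Lemma sqn_nat (n : nat) : sqn (n%:R : R[i]) = n%:R ^+ 2.
Proof. by rewrite natC /sqn /= expr0n /= addr0. Qed.

Lemma sqn1 : sqn (1 : R[i]) = 1.
Proof. by rewrite /sqn /= expr1n expr0n addr0. Qed.

Lemma sq_le (A B K : R) : 0 <= A -> A <= K * B -> A ^+ 2 <= K ^+ 2 * B ^+ 2.
Proof. move=> A0 h; nra. Qed.

Lemma sqrt_nat_le (n : nat) (x : R) : 0 <= x -> Num.sqrt (n%:R * x) <= n%:R * Num.sqrt x.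
Proof.
move=> x0; rewrite sqrtrM ?ler0n //; apply: ler_wpM2r; first exact: sqrtr_ge0.
rewrite -[X in _ <= X]ger0_norm ?ler0n // -sqrtr_sqr ler_sqrt ?exprn_ge0 ?ler0n //.
rewrite -natrX ler_nat; case: n => // n; rewrite expnS leq_pmulr //.
Qed.

End PartA.

Section PartB.
Variables (R : realType) (Γ : choiceType) (S X : Type).
Variables (d c : Γ -> S) (mul : Γ -> Γ -> Γ) (τ : S -> X).
Local Notation L := (Lop d c mul).
Local Notation P := (m_pre d c mul).
Implicit Types (f g : vec R Γ).

Lemma l2n2_ge0 f : (0 <= l2n2 f)%E.
Proof. by apply: esum_ge0 => i _; rewrite lee_fin sqn_ge0. Qed.

Lemma l2n2_fin f : (l2n2 f < +oo)%E -> l2n2 f = (fine (l2n2 f))%:E.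
Proof. by move=> h; rewrite fineK // ge0_fin_numE // l2n2_ge0. Qed.

Lemma fine_l2_ge0 f : 0 <= fine (l2n2 f).
Proof. by apply: fine_ge0; apply: l2n2_ge0. Qed.

Lemma Lop_fin γ f a : finite_set (P γ a) ->
  L γ f a = \sum_(b <- fset_set (P γ a)) f b.
Proof. by move=> h; rewrite /Lop fsbig_finite. Qed.

Lemma sum_le_l2 f (A : set Γ) : finite_set A ->
  ((\sum_(b <- fset_set A) sqn (f b))%:E <= l2n2 f)%E.
Proof.
move=> finA; apply: esum_ge; exists A; first by split.
by rewrite fsbig_finite // sumEFin.
Qed.

Lemma term_le_l2 f a : ((sqn (f a))%:E <= l2n2 f)%E.
Proof.
have := @sum_le_l2 f _ (finite_set1 a); by rewrite fset_set1 big_seq_fset1.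
Qed.

Lemma sum_le_fine f (A : set Γ) : finite_set A -> (l2n2 f < +oo)%E ->
  \sum_(b <- fset_set A) sqn (f b) <= fine (l2n2 f).
Proof.
move=> finA fin; rewrite -lee_fin -l2n2_fin //; exact: sum_le_l2.
Qed.

Lemma Lop_sqn_le γ f a (n : nat) : finite_set (P γ a) ->
  (#|` fset_set (P γ a)| <= n)%N -> (l2n2 f < +oo)%E ->
  sqn (L γ f a) <= n%:R * fine (l2n2 f).
Proof.
move=> finP hn fin; rewrite Lop_fin //.
apply: (le_trans (@CS R _ _ _)).
apply: ler_pM; first by rewrite ler0n.
- by apply: sumr_ge0 => i _; apply: sqn_ge0.
- by rewrite ler_nat.
- exact: sum_le_fine.
Qed.

Lemma Lop_supp γ f a : is_semigroupoid d c mul -> L γ f a != 0 -> c a = c γ.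
Proof.
case=> _ _ _ hc _ ne; case: (pselect (c a = c γ)) => // nc.
move: ne; rewrite /Lop fsbig1 ?eqxx // => b [cb e].
by case: nc; rewrite -e hc.
Qed.

Lemma P_empty γ a : is_semigroupoid d c mul -> c a <> c γ -> P γ a = set0.
Proof.
case=> _ _ _ hc _ ne; apply/seteqP; split => // b [cb ab].
by apply: ne; rewrite -ab hc.
Qed.

Lemma LopE1 γ f b : (forall b1 b2, c b1 = d γ -> c b2 = d γ -> mul γ b1 = mul γ b2 -> b1 = b2) ->
  c b = d γ -> L γ f (mul γ b) = f b.
Proof.
move=> inj cb; rewrite /Lop.
have -> : [set b0 | c b0 = d γ /\ mul γ b0 = mul γ b] = [set b].
  apply/seteqP; split => [x [cx e]|x -> //].
  exact: inj.
by rewrite fsbig_set1.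
Qed.

Lemma LopE0 γ f a : (forall b, c b = d γ -> mul γ b <> a) -> L γ f a = 0.
Proof. by move=> h; apply: fsbig1 => b [cb e]; case: (h b cb e). Qed.


Lemma sum_const_seq (T : Type) (s : seq T) (x : R) : \sum_(i <- s) x = (size s)%:R * x.
Proof.
elim: s => [|a s IH]; first by rewrite big_nil mul0r.
by rewrite big_cons IH /= -natr1 mulrDl mul1r addrC.
Qed.

Definition ind (F : {fset Γ}) (t : R[i]) : vec R Γ := fun b => if b \in F then t else 0.

Lemma l2n2_ind F t : l2n2 (ind F t) = (#|` F|%:R * sqn t)%:E.
Proof.
rewrite /l2n2 (@esumT_fin R Γ F); last 2 first.
- by move=> i; apply: sqn_ge0.
- by move=> i iF; rewrite /ind (negbTE iF) sqn0.
congr EFin; rewrite big_seq (eq_bigr (fun _ => sqn t)) -?big_seq.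
  by rewrite sum_const_seq.
by move=> i iF; rewrite /ind iF.
Qed.

Lemma Lop_ind γ β F t : [set` F] `<=` P γ β ->
  forall a, L γ (ind F t) a = if a == β then #|` F|%:R * t else 0.
Proof.
move=> FP a; case: eqP => [->|ne].
  rewrite /Lop -(fsbig_widen [set` F]); last 2 first.
  - exact: FP.
  - by move=> x [_ /= xF]; rewrite /ind /= (negbTE (introN idP xF)).
  rewrite -fsbig_seq // big_seq (eq_bigr (fun _ => t)) -?big_seq.
    elim: (enum_fset F) => [|y s IH]; first by rewrite big_nil mul0r.
    by rewrite big_cons IH /= -natr1 mulrDl mul1r addrC.
  by move=> i iF; rewrite /ind iF.
apply: fsbig1 => b [cb e]; rewrite /ind; case: ifP => // bF.
by have [_ e'] := FP b bF; case: ne; rewrite -e.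
Qed.

Lemma findom_ind γ β F t : [set` F] `<=` P γ β -> findom c τ (τ (d γ)) (ind F t).
Proof.
move=> FP; split; first split.
- move=> g ng; rewrite /ind; case: ifP => // gF.
  by have [cg _] := FP g gF; case: ng; rewrite cg.
- by rewrite l2n2_ind ltry.
apply: (@sub_finite_set _ _ [set` F]) => //.
by move=> g; rewrite /supp /ind /=; case: ifP => // _; rewrite eqxx.
Qed.

Lemma ip_pt β (k : R[i]) g : ip (fun i => if i == β then k else 0) g = k * conjc (g β).
Proof.
rewrite /ip (@csum_fin R Γ [fset β]%fset).
  by rewrite big_seq_fset1 eqxx.
by move=> i; rewrite inE => /negbTE ->; rewrite mul0r.
Qed.

Lemma ip_delta f β : ip f (delta R β) = f β.
Proof.
rewrite /ip (@csum_fin R Γ [fset β]%fset).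
  by rewrite big_seq_fset1 /delta eqxx; rewrite [conjc 1]/= ; case: (f β) => x y /=; congr Complex; ring.
by move=> i; rewrite inE /delta => /negbTE ->; rewrite [conjc 0]/= ; case: (f i) => x y /=; congr Complex; ring.
Qed.

Lemma l2n2_delta (β : Γ) : l2n2 (delta R β) = 1%E.
Proof.
rewrite /l2n2 (@esumT_fin R Γ [fset β]%fset); last 2 first.
- by move=> i; apply: sqn_ge0.
- by move=> i; rewrite inE /delta => /negbTE ->; rewrite sqn0.
by rewrite big_seq_fset1 /delta eqxx /sqn /= expr1n expr0n addr0.
Qed.

Lemma l2sp_delta γ β : c β = c γ -> l2sp c τ (τ (c γ)) (delta R β).
Proof.
move=> cb; split; last by rewrite l2n2_delta ltry.
by move=> g ng; rewrite /delta; case: eqP => // e; case: ng; rewrite e cb.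
Qed.


Lemma part_i_fin γ β : c β = c γ -> finite_set (P γ β) ->
  adj_dom d c mul τ γ (delta R β).
Proof.
move=> cb finP; split; first exact: l2sp_delta.
exists (#|` fset_set (P γ β)|)%:R => f [[_ fin] _].
rewrite ip_delta /cabs /l2norm.
have h1 := @Lop_sqn_le γ f β _ finP (leqnn _) fin.
apply: le_trans (@sqrt_nat_le R _ _ (fine_l2_ge0 f)).
by rewrite ler_sqrt // mulr_ge0 ?ler0n ?fine_l2_ge0.
Qed.

Lemma ind_bound γ β g (K : R) (F : {fset Γ}) :
  [set` F] `<=` P γ β ->
  (forall f, findom c τ (τ (d γ)) f -> cabs (ip (L γ f) g) <= K * l2norm f) ->
  (#|` F|%:R * sqn (g β) <= K ^+ 2).
Proof.
move=> FP HK; set m := #|` F|.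
have := HK _ (@findom_ind γ β F 1 FP).
have -> : L γ (ind F 1) = fun a => if a == β then m%:R * 1 else 0.
  by apply: funext => a; rewrite (@Lop_ind γ β F 1 FP).
rewrite ip_pt /l2norm l2n2_ind /= /cabs sqnM sqn_conj mulr1 sqn_nat sqn1 mulr1.
move=> h.
have := @sq_le R _ _ _ (sqrtr_ge0 _) h.
rewrite !sqr_sqrtr ?mulr_ge0 ?exprn_ge0 ?ler0n ?sqn_ge0 //.
case: (posnP m) => [->|mpos]; first by rewrite mul0r sqr_ge0.
move=> h2; have mp : (0 : R) < m%:R by rewrite ltr0n.
rewrite -(ler_pM2l mp) mulrA -expr2; apply: le_trans h2 _.
by rewrite mulrC.
Qed.

Lemma part_i_inf γ β : infinite_set (P γ β) ->
  forall g, adj_dom d c mul τ γ g -> ip g (delta R β) = 0.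
Proof.
move=> inf g [_ [K HK]]; rewrite ip_delta.
suff s0 : sqn (g β) = 0 by apply: sqn_eq0.
have key : forall n : nat, n%:R * sqn (g β) <= K ^+ 2.
  move=> n; have [F FP Fn] := infinite_set_fset n inf.
  apply: le_trans (@ind_bound γ β g K F FP HK).
  by apply: ler_wpM2r; [apply: sqn_ge0 | rewrite ler_nat].
apply/eqP; rewrite eq_le sqn_ge0 andbT; apply/negP => /negP.
rewrite -ltNge => spos.
have x0 : 0 <= K ^+ 2 / sqn (g β) by rewrite divr_ge0 ?sqr_ge0 ?sqn_ge0.
have := archi_boundP x0; set n := Num.Def.archi_bound _ => hn.
have := key n; rewrite -(ler_pdivlMr _ _ spos) => h.
by have := lt_le_trans hn h; rewrite ltxx.
Qed.


Lemma closable_fin γ β : c β = c γ -> closable R d c mul τ γ -> finite_set (P γ β).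
Proof.
move=> cb cl; apply: contrapT => inf.
have H : forall n : nat, exists F : {fset Γ}, [set` F] `<=` P γ β /\ (n.+1 <= #|` F|)%N.
  by move=> n; have [F ? ?] := infinite_set_fset n.+1 inf; exists F.
case: (choice H) => Fs HF.
pose t n : R[i] := Complex ((#|` Fs n|)%:R^-1) 0.
pose u n := ind (Fs n) (t n).
have mpos n : (0 : R) < (#|` Fs n|)%:R.
  by rewrite ltr0n; apply: leq_trans (HF n).2.
have Lu n : L γ (u n) = delta R β.
  apply: funext => a; rewrite (@Lop_ind γ β (Fs n) (t n) (HF n).1) /delta.
  case: eqP => // _; rewrite natC /t cmul cone !mul0r !mulr0 subr0 addr0 mulfV //.
  by rewrite gt_eqF.
have conv2 : l2n2 (fun i => L γ (u n) i - delta R β i) @[n --> \oo] --> 0%E.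
  suff -> : (fun n => l2n2 (fun i => L γ (u n) i - delta R β i)) = (fun=> 0%E).
    exact: cvg_cst.
  apply: funext => n; rewrite Lu /l2n2 esum1 // => i _; rewrite subrr sqn0.
  by [].
have eu n : l2n2 (u n) = ((#|` Fs n|)%:R^-1)%:E.
  rewrite l2n2_ind /sqn /= expr0n /= addr0; congr EFin.
  by rewrite expr2 mulrA mulfV ?mul1r // gt_eqF.
have conv1 : l2n2 (u n) @[n --> \oo] --> ((0:R)%:E).
  apply/fine_cvgP; split; first by apply: nearW => n; rewrite eu.
  have -> : (fine \o (fun n => l2n2 (u n))) = (fun n => (#|` Fs n|)%:R^-1).
    by apply: funext => n; rewrite /= eu.
  apply: (@squeeze_cvgr _ _ _ R (fun=> 0) harmonic); [|exact: cvg_cst|exact: cvg_harmonic].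
  apply: nearW => n; rewrite invr_ge0 ltW //=.
  rewrite lef_pV2 ?posrE ?ltr0n //.
    by have := (HF n).2; rewrite -(ler_nat R) => h; exact: h.
  exact: leq_ltn_trans (leq0n n) (HF n).2.
have := cl u (delta R β) (fun n => @findom_ind γ β _ _ (HF n).1) (@l2sp_delta γ β cb) conv1 conv2.
move=> /(congr1 (fun h => h β)); rewrite /delta eqxx => /eqP.
by rewrite oner_eq0.
Qed.


Lemma cvg0_lt (f : nat -> \bar R) (e : R) : f n @[n --> \oo] --> 0%E -> 0 < e ->
  \forall n \near \oo, (f n < e%:E)%E.
Proof.
move=> /fine_cvgP [fin cf] e0.
have hl := @cvgr_lt _ _ _ _ _ 0 cf e e0.
near=> n.
have fn : f n \is a fin_num by near: n.
have fl : fine (f n) < e by near: n; exact: hl.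
by rewrite -(fineK fn) lte_fin.
Unshelve. all: end_near.
Qed.

Lemma fin_closable γ : is_semigroupoid d c mul ->
  (forall β, c β = c γ -> finite_set (P γ β)) -> closable R d c mul τ γ.
Proof.
move=> sg hfin u h hu hh c1 c2; apply: funext => a.
apply: sqn_eq0.
have finPa : finite_set (P γ a).
  case: (pselect (c a = c γ)) => [ca|nca]; first exact: hfin.
  by rewrite (@P_empty γ a sg nca).
set na := #|` fset_set (P γ a)|.
apply/eqP; rewrite eq_le sqn_ge0 andbT leNgt; apply/negP => spos.
set s := sqn (h a) in spos *.
pose e := s / (4 * (na%:R + 1)).
have d0 : 0 < 4 * (na%:R + 1) :> R by rewrite mulr_gt0 // ltr_wpDl ?ler0n.
have e0 : 0 < e by rewrite divr_gt0.
have [n [h1 h2]] : exists n, (l2n2 (u n) < e%:E)%E /\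
    (l2n2 (fun i => (L γ (u n) i - h i)%R) < e%:E)%E.
  have H1 := @cvg0_lt _ e c1 e0; have H2 := @cvg0_lt _ e c2 e0.
  apply: (@filter_ex _ _ eventually_filter); near=> n; split; [near: n; exact: H1|near: n; exact: H2].
have fin1 : (l2n2 (u n) < +oo)%E by apply: lt_trans h1 (ltry e).
have A1 : sqn (L γ (u n) a) <= na%:R * e.
  apply: le_trans (@Lop_sqn_le γ (u n) a na finPa (leqnn _) fin1) _.
  apply: ler_wpM2l; first by rewrite ler0n.
  by move: h1; rewrite l2n2_fin // lte_fin => /ltW.
have A2 : sqn (L γ (u n) a - h a) <= e.
  have := term_le_l2 (fun i => L γ (u n) i - h i) a.
  by move=> /le_lt_trans /(_ h2); rewrite lte_fin => /ltW.
have A3 : s <= 2 * (sqn (L γ (u n) a) + sqn (L γ (u n) a - h a)).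
  have := @sqnD_le R (L γ (u n) a) (h a - L γ (u n) a).
  by rewrite addrC subrK sqnB.
have ee : e * (4 * (na%:R + 1)) = s by rewrite /e divfK // gt_eqF.
have N0 : 0 <= na%:R :> R by rewrite ler0n.
nra.
Unshelve. all: end_near.
Qed.


Lemma Lop_l2_le γ (N : nat) f :
  (forall a, finite_set (P γ a) /\ (#|` fset_set (P γ a)| <= N)%N) ->
  (l2n2 f < +oo)%E -> (l2n2 (L γ f) <= (N%:R * fine (l2n2 f))%:E)%E.
Proof.
move=> hN fin.
apply: (@le_trans _ _ (\esum_(a in [set: Γ]) \esum_(b in P γ a) (N%:R * sqn (f b))%:E)).
  apply: le_esum => a _.
  have [fa na] := hN a.
  rewrite esum_fset //; last by move=> i _; rewrite lee_fin mulr_ge0 ?ler0n ?sqn_ge0.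
  rewrite fsbig_finite // sumEFin lee_fin -mulr_sumr.
  rewrite Lop_fin //; apply: le_trans (@CS R _ _ _) _.
  apply: ler_wpM2r; first by apply: sumr_ge0 => i _; apply: sqn_ge0.
  by rewrite ler_nat.
rewrite esum_esum; last by move=> *; rewrite lee_fin mulr_ge0 ?ler0n ?sqn_ge0.
rewrite (reindex_esum (fun b => c b = d γ) _ (fun b => (mul γ b, b))); last first.
  split.
  - by move=> b cb /=.
  - by move=> b1 b2 _ _ [_ ->].
  - by move=> [a b] [_ [cb e]]; exists b => //=; rewrite e.
apply: ge_ereal_sup => _ [Y [finY YF] <-].
rewrite fsbig_finite // sumEFin lee_fin -mulr_sumr.
apply: ler_wpM2l; first by rewrite ler0n.
exact: sum_le_fine.
Qed.

Lemma card_hyp γ (N : nat) : is_semigroupoid d c mul ->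
  (forall β, c β = c γ -> (P γ β #<= `I_N)%card) ->
  (forall a, finite_set (P γ a) /\ (#|` fset_set (P γ a)| <= N)%N).
Proof.
move=> sg hN a; case: (pselect (c a = c γ)) => [ca|nca].
  split; first by apply/finite_set_leP; exists N; apply: hN.
  exact: geq_card_fset_set (hN a ca).
by rewrite (@P_empty γ a sg nca) fset_set0 cardfs0.
Qed.

Lemma part_ii_norm γ (N : nat) : is_semigroupoid d c mul ->
  (forall β, c β = c γ -> (P γ β #<= `I_N)%card) ->
  forall f, (l2n2 f < +oo)%E -> l2norm (L γ f) <= N%:R * l2norm f.
Proof.
move=> sg hN f fin.
have h := @Lop_l2_le γ N f (@card_hyp γ N sg hN) fin.
have fin2 : (l2n2 (L γ f) < +oo)%E by apply: le_lt_trans h (ltry _).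
rewrite (@l2n2_fin _ fin2) lee_fin in h.
rewrite /l2norm; apply: le_trans (@sqrt_nat_le R _ _ (fine_l2_ge0 f)).
by rewrite ler_sqrt // mulr_ge0 ?ler0n ?fine_l2_ge0.
Qed.

Lemma not_card_le (A : set Γ) (N : nat) : ~ (A #<= `I_N)%card ->
  exists2 F : {fset Γ}, [set` F] `<=` A & (N < #|` F|)%N.
Proof.
move=> nc; case: (pselect (finite_set A)) => [finA|infA].
  exists (fset_set A); first by rewrite fset_setK.
  rewrite ltnNge; apply/negP => le; apply: nc.
  have /finite_setP [m Am] := finA.
  rewrite (card_le_eql Am) card_le_II.
  by rewrite -(card_fset_set Am).
by have [F ? ?] := infinite_set_fset N.+1 infA; exists F.
Qed.

Lemma bounded_card γ : Lbounded R d c mul τ γ ->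
  exists N : nat, forall β, c β = c γ -> (P γ β #<= `I_N)%card.
Proof.
case=> K HK.
have K0 : 0 <= K ^+ 2 by apply: sqr_ge0.
exists (Num.Def.archi_bound (K ^+ 2)); set N := Num.Def.archi_bound _.
have hN : K ^+ 2 < N%:R by apply: archi_boundP.
move=> β cb; apply: contrapT => ncard.
have [F FP FN] := @not_card_le _ _ ncard.
set m := #|` F| in FN.
have := HK _ (@findom_ind γ β F 1 FP).
have -> : L γ (ind F 1) = ind [fset β]%fset (m%:R * 1).
  by apply: funext => a; rewrite (@Lop_ind γ β F 1 FP) /ind in_fset1.
rewrite /l2norm !l2n2_ind /= cardfs1 mul1r mulr1 sqn1 mulr1 sqn_nat.
rewrite sqrtr_sqr ger0_norm ?ler0n // => h.
have := @sq_le R _ _ _ (ler0n _ _) h.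
rewrite sqr_sqrtr ?ler0n // => h2.
have mpos : (0 : R) < m%:R by rewrite ltr0n; apply: leq_ltn_trans (leq0n N) FN.
have h3 : m%:R <= K ^+ 2 by rewrite -(ler_pM2r mpos) -expr2.
have : (N < m)%N := FN; rewrite -(ltr_nat R) => h4.
by have := lt_trans hN h4; rewrite ltNge h3.
Qed.


Section Inj.
Hypothesis injG : forall γ b1 b2, c b1 = d γ -> c b2 = d γ -> mul γ b1 = mul γ b2 -> b1 = b2.

Lemma inj_card γ a : finite_set (P γ a) /\ (#|` fset_set (P γ a)| <= 1)%N.
Proof.
case: (pselect (exists b, P γ a b)) => [[b [cb e]]|nb].
  have -> : P γ a = [set b].
    apply/seteqP; split => [x [cx ex]|x -> //].
    by apply: (@injG γ x b cx cb); rewrite ex e.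
  by rewrite fset_set1 cardfs1; split => //; apply: finite_set1.
have -> : P γ a = set0.
  by apply/seteqP; split => // x Px; case: nb; exists x.
by rewrite fset_set0 cardfs0.
Qed.

Lemma inj_norm γ f : (l2n2 f < +oo)%E -> l2norm (L γ f) <= 1%:R * l2norm f.
Proof.
move=> fin.
have h := @Lop_l2_le γ 1 f (@inj_card γ) fin.
have fin2 : (l2n2 (L γ f) < +oo)%E by apply: le_lt_trans h (ltry _).
rewrite (@l2n2_fin _ fin2) lee_fin in h.
rewrite /l2norm; apply: le_trans (@sqrt_nat_le R _ _ (fine_l2_ge0 f)).
by rewrite ler_sqrt // mulr_ge0 ?ler0n ?fine_l2_ge0.
Qed.

Lemma inj_fin γ f : (l2n2 f < +oo)%E -> (l2n2 (L γ f) < +oo)%E.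
Proof.
move=> fin; have h := @Lop_l2_le γ 1 f (@inj_card γ) fin.
by apply: le_lt_trans h (ltry _).
Qed.

Lemma LopE1' γ f b : c b = d γ -> L γ f (mul γ b) = f b.
Proof. by apply: LopE1 => b1 b2; apply: injG. Qed.

Lemma inj_bl γ : is_semigroupoid d c mul ->
  bounded_linear c τ (τ (d γ)) (τ (c γ)) (@Lop R Γ S d c mul γ).
Proof.
move=> sg; split.
- move=> f [supf fin]; split; last exact: inj_fin.
  move=> a na; apply/eqP; apply: contraT => /(@Lop_supp γ f a sg) ca.
  by case: na; rewrite ca.
- move=> k f g _ _; apply: funext => a.
  case: (pselect (exists b, c b = d γ /\ mul γ b = a)) => [[b [cb <-]]|nb].
    by rewrite !LopE1'.
  have h0 : forall b, c b = d γ -> mul γ b <> a by move=> b cb e; apply: nb; exists b.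
  by rewrite !(fun h => @LopE0 γ h a h0) mulr0 addr0.
- exists 1 => f [_ fin]; rewrite -[1]/(1%:R); exact: inj_norm.
Qed.

Lemma l2_iso γ f : (forall i, c i <> d γ -> f i = 0) -> l2n2 (L γ f) = l2n2 f.
Proof.
move=> hf; rewrite /l2n2.
transitivity (\esum_(a in (mul γ) @` (fun b => c b = d γ)) (sqn (L γ f a))%:E).
  rewrite [in RHS]esum_mkcond; apply: eq_esum => a _; case: ifPn => // ha.
  move: ha; rewrite notin_setE => ha.
  rewrite LopE0 ?sqn0 // => b cb e; apply: ha; exists b => //.
rewrite esum_image; last first.
  by move=> b1 b2; rewrite !in_setE => cb1 cb2; apply: injG.
transitivity (\esum_(i in fun b => c b = d γ) (sqn (f i))%:E).
  by apply: eq_esum => b cb; rewrite LopE1'.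
rewrite esum_mkcond; apply: eq_esum => b _; case: ifPn => //.
rewrite notin_setE => ncb; by rewrite hf // sqn0.
Qed.

Lemma re_mulconj (z : R[i]) : re (z * conjc z) = sqn z.
Proof. by case: z => x y; rewrite /sqn /=; ring. Qed.

Lemma inj_pi γ : partial_isometry c τ (τ (d γ)) (@Lop R Γ S d c mul γ).
Proof.
move=> f hf orth.
pose k : vec R Γ := fun i => if `[< c i = d γ >] then 0 else f i.
have kl2 : l2sp c τ (τ (d γ)) k.
  split.
    by move=> g ng; rewrite /k; case: asboolP => // _; exact: hf.1 g ng.
  apply: le_lt_trans hf.2; apply: le_esum => i _; rewrite lee_fin /k.
  by case: asboolP => _ //; rewrite sqn0 sqn_ge0.
have kL : L γ k = (fun=> 0).
  apply: funext => a; apply: fsbig1 => b [cb _]; rewrite /k.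
  by case: asboolP.
have ip0 := orth k kl2 kL.
pose v i := if `[< c i = d γ >] then 0 else sqn (f i).
have v0 i : 0 <= v i by rewrite /v; case: asboolP => _ //; apply: sqn_ge0.
have ev : (fun i => re (f i * conjc (k i))) = v.
  apply: funext => i; rewrite /v /k; case: asboolP => _; last exact: re_mulconj.
  by rewrite [conjc 0]/= oppr0 mulr0.
have : re (ip f k) = 0 by rewrite ip0.
rewrite /ip /csum /= ev /rsum.
have -> : \esum_(i in [set: Γ]) (Num.max (- v i) 0)%:E = 0%E.
  apply: esum1 => i _; congr EFin.
  by have := v0 i; rewrite /Order.max; case: ifPn => h; lra.
have -> : (fun i => (Num.max (v i) 0)%:E) = (fun i => (v i)%:E).
  apply: funext => i; congr EFin.
  by have := v0 i; rewrite /Order.max; case: ifPn => h; lra.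
rewrite subr0 => fv.
have ve : (\esum_(i in [set: Γ]) (v i)%:E <= l2n2 f)%E.
  apply: le_esum => i _; rewrite lee_fin /v; case: asboolP => _ //; apply: sqn_ge0.
have vfin : \esum_(i in [set: Γ]) (v i)%:E \is a fin_num.
  rewrite ge0_fin_numE; first exact: le_lt_trans ve hf.2.
  by apply: esum_ge0 => i _; rewrite lee_fin.
have vz : \esum_(i in [set: Γ]) (v i)%:E = 0%E by rewrite -(fineK vfin) fv.
have hoff : forall i, c i <> d γ -> f i = 0.
  move=> i ni; apply: sqn_eq0.
  have : ((v i)%:E <= \esum_(i in [set: Γ]) (v i)%:E)%E.
    apply: esum_ge; exists [set i]; first by split => //; apply: finite_set1.
    by rewrite fsbig_set1.
  rewrite vz lee_fin /v; case: asboolP => // _ h.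
  by apply/eqP; rewrite eq_le h sqn_ge0.
by rewrite /l2norm l2_iso.
Qed.


Lemma inj_comp a b f : is_semigroupoid d c mul -> d a = c b ->
  L (mul a b) f = L a (L b f).
Proof.
case=> _ _ hd hc hassoc dacb; apply: funext => x.
case: (pselect (exists y, c y = d b /\ mul (mul a b) y = x)) => [[y [cy <-]]|ny].
  rewrite LopE1'; last by rewrite (hd _ _ dacb).
  rewrite (hassoc _ _ _ dacb (esym cy)) LopE1'; last by rewrite (hc _ _ (esym cy)) dacb.
  by rewrite LopE1'.
rewrite LopE0; last first.
  by move=> y; rewrite (hd _ _ dacb) => cy e; apply: ny; exists y.
case: (pselect (exists z, c z = d a /\ mul a z = x)) => [[z [cz ez]]|nz].
  rewrite -ez LopE1' // LopE0 // => y cy e; apply: ny; exists y; split => //.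
  by rewrite (hassoc _ _ _ dacb (esym cy)) e.
by rewrite LopE0 // => z cz e; apply: nz; exists z.
Qed.

End Inj.

Lemma orth_L a b f g : is_semigroupoid d c mul -> c a <> c b -> ip (L a f) (L b g) = 0.
Proof.
move=> sg ne; rewrite /ip (@csum_fin R Γ fset0) ?big_seq_fset0 // => i _.
case: (eqVneq (L a f i) 0) => [->|ha]; first by rewrite mul0r.
case: (eqVneq (L b g i) 0) => [->|hb]; first by rewrite [conjc 0]/= oppr0 mulr0.
by case: ne; rewrite -(@Lop_supp a f i sg ha) (@Lop_supp b g i sg hb).
Qed.

Lemma main_sec :
  is_semigroupoid d c mul ->
  (forall γ β : Γ, c β = c γ ->
     (finite_set (m_pre d c mul γ β) ->
        adj_dom (R:=R) d c mul τ γ (delta R β)) /\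
     (infinite_set (m_pre d c mul γ β) ->
        forall g, adj_dom (R:=R) d c mul τ γ g -> ip g (delta R β) = 0)) /\
  (forall γ : Γ, closable R d c mul τ γ <->
     (forall β, c β = c γ -> finite_set (m_pre d c mul γ β))) /\
  (forall γ : Γ,
     (Lbounded R d c mul τ γ <->
       exists N : nat, forall β, c β = c γ -> (m_pre d c mul γ β #<= `I_N)%card) /\
     (forall N : nat, (forall β, c β = c γ -> (m_pre d c mul γ β #<= `I_N)%card) ->
        Lnorm_le (R:=R) d c mul τ γ N%:R)) /\
  ((forall γ β β' : Γ, c β = d γ -> c β' = d γ -> β <> β' -> mul γ β <> mul γ β') ->
   exists Φ : Γ -> vec R Γ -> vec R Γ,
     (forall γ, (forall f, findom c τ (τ (d γ)) f -> Φ γ f = Lop d c mul γ f) /\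
                partial_isometry c τ (τ (d γ)) (Φ γ)) /\
     is_orthogonal_rep d c mul τ Φ).
Proof.
move=> sg; split; [|split; [|split]].
- move=> γ β cb; split; [exact: part_i_fin | exact: part_i_inf].
- move=> γ; split; [move=> cl β cb; exact: closable_fin | exact: fin_closable].
- move=> γ; split.
  + split; first exact: bounded_card.
    case=> N hN; exists N%:R => f [[_ fin] _]; exact: part_ii_norm.
  + move=> N hN f [[_ fin] _]; exact: part_ii_norm.
- move=> inj.
  have injG : forall γ b1 b2, c b1 = d γ -> c b2 = d γ -> mul γ b1 = mul γ b2 -> b1 = b2.
    move=> γ b1 b2 h1 h2 e; apply: contrapT => ne; exact: inj γ b1 b2 h1 h2 ne e.
  exists (fun γ => Lop d c mul γ); split.
    move=> γ; split => //; exact: (inj_pi injG).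
  split; first split.
  + move=> γ; exact: (inj_bl injG).
  + move=> a b dab f _; exact: (inj_comp injG).
  + move=> a b _ ne f g _ _; exact: orth_L.
Qed.


End PartB.

Theorem mainTheorem13 (R : realType) (Γ : choiceType) (S X : Type)
  (d c : Γ -> S) (mul : Γ -> Γ -> Γ) (τ : S -> X) :
  is_semigroupoid d c mul ->
  (* (i) *)
  (forall γ β : Γ, c β = c γ ->
     (finite_set (m_pre d c mul γ β) ->
        adj_dom (R:=R) d c mul τ γ (delta R β)) /\
     (infinite_set (m_pre d c mul γ β) ->
        forall g, adj_dom (R:=R) d c mul τ γ g -> ip g (delta R β) = 0)) /\
  (forall γ : Γ, closable R d c mul τ γ <->
     (forall β, c β = c γ -> finite_set (m_pre d c mul γ β))) /\
  (* (ii) *)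
  (forall γ : Γ,
     (Lbounded R d c mul τ γ <->
       exists N : nat, forall β, c β = c γ -> (m_pre d c mul γ β #<= `I_N)%card) /\
     (forall N : nat, (forall β, c β = c γ -> (m_pre d c mul γ β #<= `I_N)%card) ->
        Lnorm_le (R:=R) d c mul τ γ N%:R)) /\
  (* (iii) *)
  ((forall γ β β' : Γ, c β = d γ -> c β' = d γ -> β <> β' -> mul γ β <> mul γ β') ->
   exists Φ : Γ -> vec R Γ -> vec R Γ,
     (forall γ, (forall f, findom c τ (τ (d γ)) f -> Φ γ f = Lop d c mul γ f) /\
                partial_isometry c τ (τ (d γ)) (Φ γ)) /\
     is_orthogonal_rep d c mul τ Φ).
Proof. exact: (@main_sec R Γ S X d c mul τ). Qed.
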